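(* Let $X$ be a super $X$-set parameter, let $t\ge 0$ be an integer, let $G$ be a graph, and let $H$ be an induced subgraph of $\mathfrak{X}(G)$ with $H\cong Q_t$. Then there are $X$-sets $S\subseteq T$ of $G$ with $|T\setminus S|=t$ such that $V(H)=\{R: S\subseteq R\subseteq T\}$; i.e., $V(H)$ is an interval of length $t$ in the poset $(\mathcal{P}(V(G)),\subseteq)$.
   Context: All graphs are finite, simple, undirected, with nonempty vertex set. A super $X$-set parameter $X$ assigns to each graph $G$ a family of subsets of $V(G)$, called the $X$-sets of $G$, such that: every graph isomorphism maps $X$-sets to $X$-sets; every graph has at least one $X$-set; and (Superset) if $S$ is an $X$-set of $G$ and $S\subseteq S'\subseteq V(G)$, then $S'$ is an $X$-set of $G$. The $X$-TAR graph $\mathfrak{X}(G)$ has as vertices the $X$-sets of $G$, with $S_1S_2$ an edge iff $|S_1\ominus S_2|=1$. $Q_t$ is the $t$-dimensional hypercube. *)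

(* Defs.v *)
From mathcomp Require Import all_boot.
Set Implicit Arguments. Unset Strict Implicit. Unset Printing Implicit Defensive.

Definition simple_graph (V : finType) (e : rel V) : Prop :=
  irreflexive e /\ symmetric e /\ 0 < #|V|.

Definition graph_iso (V1 V2 : finType) (e1 : rel V1) (e2 : rel V2)
  (f : V1 -> V2) : Prop :=
  bijective f /\ forall x y, e1 x y = e2 (f x) (f y).

Definition graph_param := forall (V : finType), rel V -> pred {set V}.

Definition super_param (X : graph_param) : Prop :=
  (forall (V1 V2 : finType) (e1 : rel V1) (e2 : rel V2) (f : V1 -> V2),
     simple_graph e1 -> simple_graph e2 -> graph_iso e1 e2 f ->
     forall S : {set V1}, X V1 e1 S -> X V2 e2 (f @: S)) /\
  (forall (V : finType) (e : rel V), simple_graph e ->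
     exists S : {set V}, X V e S) /\
  (forall (V : finType) (e : rel V), simple_graph e ->
     forall S S' : {set V}, X V e S -> S \subset S' -> X V e S').

Definition symdiff (T : finType) (A B : {set T}) : {set T} :=
  (A :\: B) :|: (B :\: A).

(* Adjacency of the X-TAR graph: |S1 (-) S2| = 1
   (its vertex set is the set of X-sets). *)
Definition tar_adj (T : finType) (S1 S2 : {set T}) : bool :=
  #|symdiff S1 S2| == 1.

Definition cube_vertex (t : nat) := {ffun 'I_t -> bool}.
Definition cube_adj (t : nat) (a b : cube_vertex t) : bool :=
  #|[set i | a i != b i]| == 1.

(* Main.v *)
Require Import Defs.
From mathcomp Require Import all_boot.
Set Implicit Arguments. Unset Strict Implicit. Unset Printing Implicit Defensive.

Section H.
Variable V : finType.

Lemma in_symdiff (A B : {set V}) v : (v \in symdiff A B) = (v \in A) (+) (v \in B).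
Proof. by rewrite /symdiff !inE; case: (v \in A); case: (v \in B). Qed.

Lemma adjP (P Q : {set V}) : tar_adj P Q ->
  exists y, forall v, (v \in Q) = (v \in P) (+) (v == y).
Proof.
rewrite /tar_adj => /cards1P [y Hy]; exists y => v.
have := in_symdiff P Q v; rewrite Hy inE => ->.
by case: (v \in P); case: (v \in Q).
Qed.

Lemma square (B P Q R : {set V}) :
  tar_adj B P -> tar_adj B Q -> tar_adj P R -> tar_adj Q R -> P != Q -> R != B ->
  forall v, (v \in R) = (v \in P) (+) (v \in Q) (+) (v \in B).
Proof.
move=> /adjP[y Hy] /adjP[z Hz] /adjP[w1 H1] /adjP[w2 H2] PQ RB.
have yz : y != z.
  by apply: contraNneq PQ => eyz; apply/eqP/setP => v; rewrite Hy Hz eyz.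
have w1y : w1 != y.
  apply: contraNneq RB => e; apply/eqP/setP => v; rewrite H1 Hy e.
  by case: (v \in B); case: (v == y).
have key : forall v, (v == y) (+) (v == w1) = (v == z) (+) (v == w2).
  move=> v; have := H2 v; rewrite H1 Hy Hz.
  by case: (v \in B); case: (v==y); case: (v==w1); case: (v==z); case: (v==w2).
have w1z : w1 = z.
  apply/eqP; apply/negPn/negP => nz.
  have e2 : w1 = w2.
    by have := key w1; rewrite eqxx (negbTE w1y) (negbTE nz) /= => /esym/eqP.
  have := key y; rewrite eqxx -e2 (negbTE yz) [y == w1]eq_sym (negbTE w1y) /=.
  discriminate.
move=> v; rewrite H1 Hy Hz w1z.
by case: (v \in B); case: (v == y); case: (v == z).
Qed.
End H.

Definition upd t (a : cube_vertex t) (i : 'I_t) (b : bool) : cube_vertex t :=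
  [ffun k => if k == i then b else a k].

Lemma cube_adj_upd t (a : cube_vertex t) i : a i -> cube_adj (upd a i false) a.
Proof.
move=> ai; apply/cards1P; exists i; apply/setP => k; rewrite !inE !ffunE.
by case: (eqVneq k i) => [->|_] /=; rewrite ?ai ?eqxx.
Qed.

Lemma weight_upd t (a : cube_vertex t) i : a i ->
  #|[set k | upd a i false k]| < #|[set k | a k]|.
Proof.
move=> ai; rewrite (cardsD1 i [set k | a k]) inE ai add1n ltnS.
apply: subset_leq_card; apply/subsetP => k; rewrite !inE ffunE.
by case: (eqVneq k i).
Qed.

Theorem lemma2p21 (X : graph_param) (HX : super_param X) (t : nat)
  (V : finType) (e : rel V) (HG : simple_graph e)
  (VH : {set {set V}})
  (HVH : forall S, S \in VH -> X V e S)
  (phi : cube_vertex t -> {set V})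
  (phi_inj : injective phi)
  (phi_img : [set phi a | a : cube_vertex t] = VH)
  (phi_adj : forall a b, cube_adj a b = tar_adj (phi a) (phi b)) :
  exists S T : {set V},
    [/\ X V e S, X V e T, S \subset T, #|T :\: S| = t &
        VH = [set R : {set V} | (S \subset R) && (R \subset T)]].
Proof.
pose z0 : cube_vertex t := [ffun => false].
pose A := phi z0.
have hA : phi z0 = A by [].
clearbody A.
pose u (i : 'I_t) : cube_vertex t := [ffun k => k == i].
have adjA i : tar_adj A (phi (u i)).
  rewrite -hA -phi_adj; apply/cards1P; exists i; apply/setP => k.
  by rewrite !inE !ffunE; case: (k == i).
have /fin_all_exists [x hx] := fun i => adjP (adjA i).
have xinj : injective x.
  move=> i j eij.
  have : phi (u i) = phi (u j) by apply/setP => v; rewrite !hx eij.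
  move/phi_inj/(congr1 (fun g : cube_vertex t => g i)); rewrite !ffunE eqxx.
  by move/esym/eqP.
pose f (a : cube_vertex t) v := [exists i, a i && (x i == v)].
pose Xs := [set x i | i : 'I_t].
have fx a i : f a (x i) = a i.
  apply/existsP/idP => [[k /andP[ak /eqP /xinj <-]] //|ai].
  by exists i; rewrite ai eqxx.
have fn a v : v \notin Xs -> f a v = false.
  move=> nv; apply/existsP => [[k /andP[_ /eqP ek]]].
  by move: nv; rewrite -ek imset_f.
have E : forall a v, (v \in phi a) = (v \in A) (+) f a v.
  move=> a; have [n] := ubnP #|[set k | a k]|; elim: n a => [a|n IH a].
    by rewrite ltn0.
  rewrite ltnS => wa.
  case: (pickP [pred k | a k]) => [i /= ai | none].
  - case: (pickP [pred k | a k && (k != i)]) => [j /= /andP[aj ji] | none2].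
    + pose b := upd a j false; pose a' := upd a i false; pose c := upd b i false.
      have bi : b i by rewrite ffunE eq_sym (negbTE ji).
      have a'j : a' j by rewrite ffunE (negbTE ji).
      have ca' : c = upd a' j false.
        apply/ffunP => k; rewrite !ffunE.
        by case: (eqVneq k i); case: (eqVneq k j).
      have wb : #|[set k | b k]| < n by apply: leq_trans (weight_upd aj) wa.
      have wc : #|[set k | c k]| < n by apply: leq_trans (weight_upd bi) (ltnW wb).
      have wa' : #|[set k | a' k]| < n by apply: leq_trans (weight_upd ai) wa.
      have sq := @square V (phi c) (phi b) (phi a') (phi a).
      rewrite -!phi_adj in sq.
      move=> v; rewrite sq ?cube_adj_upd //; last first.
      * rewrite (inj_eq phi_inj); apply/eqP => /(congr1 (fun g : cube_vertex t => g i)).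
        by rewrite !ffunE eqxx ai.
      * rewrite (inj_eq phi_inj); apply/eqP => /(congr1 (fun g : cube_vertex t => g i)).
        by rewrite !ffunE eqxx eq_sym (negbTE ji) ai.
      * by rewrite ca' cube_adj_upd.
      rewrite (IH b) // (IH a') // (IH c) //.
      case: (boolP (v \in Xs)) => [/imsetP[k _ ->] | nv]; last first.
        by rewrite !fn //; case: (v \in A).
      rewrite !fx !ffunE.
      case: (eqVneq k i) => [eki|ki]; case: (eqVneq k j) => [ekj|kj] /=.
      * by move: ji; rewrite -eki -ekj eqxx.
      * subst k; rewrite ?(negbTE kj) ?ai /=; by case: (x i \in A).
      * subst k; rewrite ?(negbTE ki) ?aj /=; by case: (x j \in A).
      * by case: (x k \in A); case: (a k).
    + have -> : a = u i.
        apply/ffunP => k; rewrite ffunE.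
        case: (eqVneq k i) => [->|ki] //.
        by have := none2 k; rewrite /= ki andbT.
      move=> v; rewrite hx.
      case: (boolP (v \in Xs)) => [/imsetP[k _ ->] | nv].
        by rewrite fx ffunE (inj_eq xinj).
      rewrite fn //; case: eqVneq => [ev|//]; move: nv; by rewrite ev imset_f.
  - have -> : a = z0 by apply/ffunP => k; rewrite ffunE; apply: none.
    move=> v; rewrite hA.
    by case: (boolP (v \in Xs)) => [/imsetP[k _ ->] | nv];
      rewrite ?fx ?fn ?ffunE //; case: (_ \in A).
have inVH a : phi a \in VH by rewrite -phi_img imset_f.
have xs v : (v \in Xs) = [exists k, x k == v].
  apply/imsetP/existsP => [[k _ ->]|[k /eqP <-]]; exists k => //.
pose S := A :\: Xs. pose T := A :|: Xs.
have hS : S = phi [ffun k => x k \in A].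
  apply/setP => v; rewrite E !inE.
  case: (boolP (v \in Xs)) => [/imsetP[k _ ->] | nv].
    by rewrite fx ffunE; case: (x k \in A).
  by rewrite fn // addbF.
have hT : T = phi [ffun k => x k \notin A].
  apply/setP => v; rewrite E !inE.
  case: (boolP (v \in Xs)) => [/imsetP[k _ ->] | nv].
    by rewrite fx ffunE; case: (x k \in A).
  by rewrite fn // orbF addbF.
exists S, T; split.
- by apply: HVH; rewrite hS.
- by apply: HVH; rewrite hT.
- by apply/subsetP => v; rewrite !inE => /andP[_ ->].
- have -> : T :\: S = Xs.
    apply/setP => v; rewrite !inE.
    by case: (v \in Xs); case: (v \in A).
  by rewrite card_imset // card_ord.
- apply/setP => R; rewrite inE -phi_img.
  apply/imsetP/andP => [[a _ ->]|[sR RT]].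
    split; apply/subsetP => v; rewrite !inE E.
      by case/andP => nv ->; rewrite fn.
    by case: (boolP (v \in Xs)) => [_|nv]; rewrite ?orbT // fn // orbF addbF.
  exists [ffun k => (x k \in R) != (x k \in A)] => //.
  apply/setP => v; rewrite E.
  case: (boolP (v \in Xs)) => [/imsetP[k _ ->] | nv].
    by rewrite fx ffunE; case: (x k \in R); case: (x k \in A).
  rewrite fn // addbF.
  move: (subsetP sR v) (subsetP RT v); rewrite !inE (negbTE nv) /= orbF.
  by case: (v \in R); case: (v \in A) => //= H1 H2; [rewrite H2 | rewrite H1].
Qed.
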